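(* Let $A$ be a finite-dimensional real algebra in which every subalgebra generated by a single element is associative, and let $(p^{[n]}(t))_{n\in\mathbb N}$, $p^{[n]}(t)=\sum_{k=0}^\infty a_k^{[n]}t^k$, be any sequence of real power series with $\sum_{k=0}^\infty|a_k^{[n]}|<\infty$ for each $n$ and $\lim_{n\to\infty}\sup\{|a_k^{[n]}|:k\ge1\}=0$. Put $p_0^{[n]}(t)=p^{[n]}(t)-a_0^{[n]}$. If $x\in A$ satisfies $\lim_{n\to\infty}x^n=0$, then $\lim_{n\to\infty}p_0^{[n]}(x)=0$, where $p_0^{[n]}(x)=\sum_{k\ge1}a_k^{[n]}x^k$.
   Context: $A$ carries the Euclidean topology of a finite-dimensional real vector space; powers $x^k$ are well defined by the one-generator associativity. The sequence $(p^{[n]})$ is arbitrary (not necessarily iterates of one series). *)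

(* Defs.v *)
From HB Require Import structures.
From mathcomp Require Import all_boot all_order all_algebra.
From mathcomp Require Import all_classical all_reals all_analysis.
Set Implicit Arguments. Unset Strict Implicit. Unset Printing Implicit Defensive.
Import Order.TTheory GRing.Theory Num.Theory.
Import numFieldNormedType.Exports.
Local Open Scope classical_set_scope.
Local Open Scope ring_scope.

(* A finite-dimensional real algebra is modelled as the real vector space
   'rV[R]_d (with its canonical normed = Euclidean topology) together with a
   bilinear, not necessarily associative, multiplication [mul]. *)
Definition bilinear_mul (R : realType) (d : nat)
  (mul : 'rV[R]_d -> 'rV[R]_d -> 'rV[R]_d) : Prop :=
  (forall (c : R) u v w, mul (c *: u + v) w = c *: mul u w + mul v w) /\
  (forall (c : R) u v w, mul w (c *: u + v) = c *: mul w u + mul w v).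

Definition is_subalgebra (R : realType) (d : nat)
  (mul : 'rV[R]_d -> 'rV[R]_d -> 'rV[R]_d) (S : set 'rV[R]_d) : Prop :=
  S 0 /\ (forall (c : R) u v, S u -> S v -> S (c *: u + v)) /\
  (forall u v, S u -> S v -> S (mul u v)).

Definition gen_subalg (R : realType) (d : nat)
  (mul : 'rV[R]_d -> 'rV[R]_d -> 'rV[R]_d) (x : 'rV[R]_d) : set 'rV[R]_d :=
  [set y | forall S, is_subalgebra mul S -> S x -> S y].

Definition power_associative (R : realType) (d : nat)
  (mul : 'rV[R]_d -> 'rV[R]_d -> 'rV[R]_d) : Prop :=
  forall x a b c, gen_subalg mul x a -> gen_subalg mul x b -> gen_subalg mul x c ->
    mul (mul a b) c = mul a (mul b c).

(* Powers x^k for k >= 1: x^1 = x, x^(k+1) = x * x^k.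
   (The value at k = 0 is a junk value equal to x; it is never used in
   a meaningful way.) *)
Definition xpow (R : realType) (d : nat)
  (mul : 'rV[R]_d -> 'rV[R]_d -> 'rV[R]_d) (x : 'rV[R]_d) (k : nat) : 'rV[R]_d :=
  iter k.-1 (mul x) x.

Definition p0_partial (R : realType) (d : nat)
  (mul : 'rV[R]_d -> 'rV[R]_d -> 'rV[R]_d) (a : nat -> nat -> R) (n : nat)
  (x : 'rV[R]_d) : nat -> 'rV[R]_d :=
  series (fun k => a n k.+1 *: xpow mul x k.+1).

Definition p0 (R : realType) (d : nat)
  (mul : 'rV[R]_d -> 'rV[R]_d -> 'rV[R]_d) (a : nat -> nat -> R) (n : nat)
  (x : 'rV[R]_d) : 'rV[R]_d :=
  lim (p0_partial mul a n x @ \oo).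

(* Main.v *)
Require Import Defs.
From HB Require Import structures.
From mathcomp Require Import all_boot all_order all_algebra.
From mathcomp Require Import all_classical all_reals all_analysis.
Import Order.TTheory GRing.Theory Num.Theory.
Import numFieldNormedType.Exports.
Local Open Scope classical_set_scope.
Local Open Scope ring_scope.

Section Helpers.
Variables (R : realType) (d : nat) (mul : 'rV[R]_d -> 'rV[R]_d -> 'rV[R]_d).
Hypothesis bil : bilinear_mul mul.

Lemma coord_le (u : 'rV[R]_d) i : `|u ord0 i| <= `|u|.
Proof.
have /mapP[j Hj ->] : `|u ord0 i| \in [seq `|u x.1 x.2| | x : 'I_1 * 'I_d].
  by apply/mapP; exists (ord0, i) => //=; rewrite mem_enum.
by rewrite [leRHS]/Num.norm /= mx_normrE; apply/bigmax_geP; right => /=; exists j.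
Qed.

Lemma bmul0l w : mul 0 w = 0.
Proof.
have := bil.1 1 0 0 w; rewrite !scale1r addr0 => /(congr1 (fun z => z - mul 0 w)) /=.
by rewrite subrr addrK => H; rewrite -H.
Qed.
Lemma bmul0r w : mul w 0 = 0.
Proof.
have := bil.2 1 0 0 w; rewrite !scale1r addr0 => /(congr1 (fun z => z - mul w 0)) /=.
by rewrite subrr addrK => H; rewrite -H.
Qed.
Lemma bmulDl u v w : mul (u + v) w = mul u w + mul v w.
Proof. by have := bil.1 1 u v w; rewrite !scale1r. Qed.
Lemma bmulZl c u w : mul (c *: u) w = c *: mul u w.
Proof. by have := bil.1 c u 0 w; rewrite !addr0 bmul0l addr0. Qed.
Lemma bmulDr u v w : mul w (u + v) = mul w u + mul w v.
Proof. by have := bil.2 1 u v w; rewrite !scale1r. Qed.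
Lemma bmulZr c u w : mul w (c *: u) = c *: mul w u.
Proof. by have := bil.2 c u 0 w; rewrite !addr0 bmul0r addr0. Qed.

Lemma bmul_suml I (r : seq I) (P : pred I) F w :
  mul (\sum_(i <- r | P i) F i) w = \sum_(i <- r | P i) mul (F i) w.
Proof.
elim/big_rec2: _ => [|i y1 y2 _ <-]; first exact: bmul0l.
exact: bmulDl.
Qed.
Lemma bmul_sumr I (r : seq I) (P : pred I) F w :
  mul w (\sum_(i <- r | P i) F i) = \sum_(i <- r | P i) mul w (F i).
Proof.
elim/big_rec2: _ => [|i y1 y2 _ <-]; first exact: bmul0r.
exact: bmulDr.
Qed.

Definition Mb : R := \sum_(i < d) \sum_(j < d)
   `|mul (delta_mx 0 i) (delta_mx 0 j)|.

Lemma Mb_ge0 : 0 <= Mb.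
Proof. by apply: sumr_ge0 => i _; apply: sumr_ge0. Qed.

Lemma mul_bound u v : `|mul u v| <= Mb * (`|u| * `|v|).
Proof.
rewrite {1}(row_sum_delta u) {1}(row_sum_delta v) bmul_suml.
rewrite /Mb mulr_suml; apply: le_trans (ler_norm_sum _ _ _) _.
apply: ler_sum => i _; rewrite bmulZl bmul_sumr normrZ.
apply: le_trans (ler_wpM2l (normr_ge0 _) (ler_norm_sum _ _ _)) _.
rewrite mulr_sumr mulr_suml; apply: ler_sum => j _; rewrite bmulZr normrZ.
rewrite mulrCA mulrA [_ * (_ * _)]mulrC; apply: ler_wpM2r => //.
rewrite [leLHS]mulrC; apply: ler_pM => //; exact: coord_le.
Qed.

Hypothesis pa : power_associative mul.
Variable x : 'rV[R]_d.
Definition P k := iter k (mul x) x.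

Lemma P_gen k : gen_subalg mul x (P k).
Proof.
move=> S [_ [_ Sm]] Sx; elim: k => [|k IH] //=; exact: Sm.
Qed.

Lemma P_add i j : P (i + j).+1 = mul (P i) (P j).
Proof.
elim: i => [|i IH] //.
have -> : P (i.+1 + j).+1 = mul x (P (i + j).+1) by [].
have -> : P i.+1 = mul x (P i) by [].
rewrite IH (pa _ _ _ _ (P_gen 0) (P_gen i) (P_gen j)) //.
Qed.

Hypothesis Pcvg : P @ \oo --> (0 : 'rV[R]_d).

Lemma P_bounded : exists C, 0 <= C /\ forall k, `|P k| <= C.
Proof.
have := cvg_seq_bounded (cvgP _ Pcvg).
move=> /(@ex_bound _ _ _ _ _ (@globally_properfilter nat setT 0%N I)) [C HC].
exists C; have h : forall k, `|P k| <= C by move=> k; exact: HC.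
by split => //; apply: le_trans (h 0%N).
Qed.

Lemma P_small : exists m, Mb * `|P m| <= 2^-1.
Proof.
have e0 : 0 < 2^-1 / (Mb + 1) :> R by rewrite divr_gt0 // ltr_wpDl // Mb_ge0.
have := cvgr0_norm_lt _ Pcvg _ e0.
case=> N _ HN; exists N; have := HN N (leqnn N) => /= /ltW h.
have M1 : 0 < Mb + 1 by rewrite ltr_wpDl // Mb_ge0.
apply: (@le_trans _ _ ((Mb + 1) * `|P N|)).
  by apply: ler_wpM2r => //; rewrite lerDl.
apply: le_trans (ler_wpM2l (ltW M1) h) _.
by rewrite mulrC divfK // gt_eqF.
Qed.


Lemma P_sum : exists B, 0 <= B /\ forall K, \sum_(k < K) `|P k| <= B.
Proof.
have [C [C0 HC]] := P_bounded.
have [m Hm] := P_small.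
have half j : `|P (m.+1 + j)| <= 2^-1 * `|P j|.
  rewrite addSn P_add; apply: le_trans (mul_bound _ _) _.
  by rewrite mulrA; apply: ler_wpM2r.
have small K : (K <= m.+1)%N -> \sum_(k < K) `|P k| <= m.+1%:R * C.
  move=> HK; apply: le_trans (_ : \sum_(k < K) C <= _).
    by apply: ler_sum => k _.
  by rewrite sumr_const card_ord -[C *+ K]mulr_natl ler_wpM2r // ler_nat.
exists (2 * (m.+1%:R * C)); split; first by rewrite mulr_ge0 // mulr_ge0.
elim/ltn_ind => K IH.
have [HK|HK] := leqP K m.+1.
  apply: le_trans (small K HK) _.
  by rewrite ler_peMl ?mulr_ge0 // ler1n.
have lt' : (K - m.+1 < K)%N by rewrite ltn_subrL /= (leq_trans _ HK).
have IH' := IH _ lt'.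
have -> : K = (m.+1 + (K - m.+1))%N by rewrite subnKC // ltnW.
rewrite big_split_ord /=.
apply: le_trans (lerD (small _ (leqnn _)) (_ : _ <= 2^-1 * (2 * (m.+1%:R * C)))) _.
  apply: le_trans (_ : \sum_(i < K - m.+1) 2^-1 * `|P i| <= _).
    by apply: ler_sum => i _; exact: half.
  by rewrite -mulr_sumr; apply: ler_wpM2l.
have -> : (2 : R)^-1 * (2 * (m.+1%:R * C)) = m.+1%:R * C by rewrite mulKf // pnatr_eq0.
by rewrite mulr2n mulrDl mul1r.
Qed.

End Helpers.
Arguments P {R d} mul x k.
Arguments P_sum {R d mul} bil pa {x} Pcvg.

Lemma normed_cvg_rV (R : realType) d (u_ : nat -> 'rV[R]_d) :
  cvgn [normed series u_] -> cvgn (series u_).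
Proof.
move=> /cauchy_cvgP/cauchy_seriesP u_ncvg.
apply/cauchy_cvgP/cauchy_seriesP => e /u_ncvg.
apply: filterS => n /=; rewrite ger0_norm ?sumr_ge0//.
by apply: le_lt_trans; apply: ler_norm_sum.
Qed.

Theorem lemma1 (R : realType) (d : nat)
  (mul : 'rV[R]_d -> 'rV[R]_d -> 'rV[R]_d)
  (a : nat -> nat -> R) (x : 'rV[R]_d) :
  bilinear_mul mul ->
  power_associative mul ->
  (forall n, cvg (series (fun k => `|a n k|) @ \oo)) ->
  ((fun n => sup [set `|a n k| | k in [set k : nat | (1 <= k)%N]]) @ \oo --> (0 : R)) ->
  (xpow mul x @ \oo --> (0 : 'rV[R]_d)) ->
  (forall n, cvg (p0_partial mul a n x @ \oo)) /\
  (p0 mul a ^~ x @ \oo --> (0 : 'rV[R]_d)).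
Proof.
move=> bil pa habs hsup hx.
set s := fun n => sup [set `|a n k| | k in [set k : nat | (1 <= k)%N]].
have Pcvg : P mul x @ \oo --> (0 : 'rV[R]_d).
  by move: hx; rewrite -cvg_shiftS.
have [B [B0 HB]] := P_sum bil pa Pcvg.
have aub n k : `|a n k.+1| <= s n.
  apply: sup_upper_bound; last by exists k.+1.
  split; first by exists `|a n 1|; exists 1%N.
  have := cvg_seq_bounded (cvgP _ (cvg_series_cvg_0 (habs n))).
  move=> /(@ex_bound _ _ _ _ _ (@globally_properfilter nat setT 0%N I)) [M HM].
  exists M => _ [j _ <-]; have := HM j I; by rewrite /= normr_id.
have s0 n : 0 <= s n by apply: le_trans (normr_ge0 _) (aub n 0%N).
have sumb n N : \sum_(k < N) `|a n k.+1 *: P mul x k| <= s n * B.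
  apply: le_trans (_ : \sum_(k < N) s n * `|P mul x k| <= _).
    by apply: ler_sum => k _; rewrite normrZ ler_wpM2r.
  by rewrite -mulr_sumr ler_wpM2l.
have part n N : `|p0_partial mul a n x N| <= s n * B.
  rewrite /p0_partial seriesEord /=.
  exact: le_trans (ler_norm_sum _ _ _) (sumb n N).
have cv n : cvg (p0_partial mul a n x @ \oo).
  rewrite /p0_partial; apply: (@normed_cvg_rV R d (fun k => a n k.+1 *: P mul x k)). apply: nondecreasing_is_cvgn.
    rewrite /normed_series_of /series /=.
    by apply: (@nondecreasing_series _ _ xpredT 0%N) => k _ _.
  exists (s n * B) => _ [N _ <-].
  rewrite /normed_series_of /series /= big_mkord; exact: sumb.
split => //.
apply/norm_cvg0P.
apply: (squeeze_cvgr (f:=fun=> 0) (h:=fun n => s n * B)).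
- near=> n; rewrite normr_ge0 /=.
  rewrite /p0 -lim_norm //; apply: limr_le; first exact: is_cvg_norm.
  by near=> N; apply: part.
- exact: cvg_cst.
- by rewrite -(mul0r B); apply: cvgMr_tmp.
Unshelve. all: by end_near.
Qed.
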